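(* Consider the two-player, three-item all-pay auction with budgets described in the context, with symmetric valuations $v_{1j}=v_{2j}=v_j$ for $j\in\{1,2,3\}$, where $v_1\ge v_2\ge v_3$. Suppose $B_i\ge\max\{\frac{v_1+v_2+v_3}{2},v_1\}$ for all $i\in\{1,2\}$. Let $z=\frac{v_1+v_2+v_3}{2}$. Case 1: $z>v_1$. Let $A=(v_1,0,z-v_1)$, $B=(z-v_2,v_2,0)$, $C=(0,z-v_3,v_3)$, let $L_{AB},L_{BC},L_{CA}$ be the line segments with the indicated endpoints and $|AB|,|BC|,|CA|$ their lengths. Let $K=\frac{z-v_3}{z-v_2}+1+\frac{z-v_3}{z-v_1}$ and $P_{AB}=\frac1K\cdot\frac{z-v_3}{z-v_2}$, $P_{BC}=\frac1K$, $P_{CA}=\frac1K\cdot\frac{z-v_3}{z-v_1}$. For each player $i\in\{1,2\}$ let $f_i(x_{i1},x_{i2},x_{i3})$ equal $\frac{P_{AB}}{|AB|}$ on $L_{AB}$, $\frac{P_{BC}}{|BC|}$ on $L_{BC}$, and $\frac{P_{CA}}{|CA|}$ on $L_{CA}$. Then $(f_1,f_2)$ forms a Nash equilibrium. Case 2: $z\le v_1$. Let $A=(v_1,0,0)$ and $B=(0,v_2,v_3)$, and for each $i\in\{1,2\}$ let $f_i(x_{i1},x_{i2},x_{i3})=\frac{1}{|AB|}$ be the uniform density on the segment $AB$ (of length $|AB|$). Then $(f_1,f_2)$ forms a Nash equilibrium.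
   Context: Multi-item all-pay auction with budgets. Two players $i\in\{1,2\}$ ($-i$ is the opponent of $i$) and $n$ items $j\in\{1,\dots,n\}$. Player $i$ has budget $B_i\ge0$ and values item $j$ at $v_{ij}>0$. A pure strategy of player $i$ is a vector $(x_{i1},\dots,x_{in})$ with all $x_{ij}\ge0$ and $\sum_j x_{ij}\le B_i$; a mixed strategy is a probability distribution over this set. On each item $j$ the higher bid wins the item. Tie-breaking on item $j$: if $x_{1j}=x_{2j}=\min\{B_1,B_2,v_{1j},v_{2j}\}$ and $\min\{B_i,v_{ij}\}>\min\{B_{-i},v_{-ij}\}$ for some $i$, then player $i$ wins item $j$; in all other ties each player wins item $j$ with probability $\frac12$. Player $i$'s utility on item $j$ is $v_{ij}-x_{ij}$ if he wins it and $-x_{ij}$ otherwise, and his total utility is the sum over items. A Nash equilibrium is a pair of mixed strategies in which each player's strategy maximizes his expected total utility against the other's, over all mixed strategies satisfying his budget constraint. Here $n=3$. Mixed strategies are specified by densities supported on finitely many line segments in $\mathbb{R}^3$; such a density is with respect to arc length (one-dimensional length measure) on the indicated segment, so the probability of a segment is the density times its length. *)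

(* Defs.v *)
From HB Require Import structures.
From mathcomp Require Import all_boot all_order all_algebra.
From mathcomp Require Import all_classical all_reals all_analysis.
Set Implicit Arguments. Unset Strict Implicit. Unset Printing Implicit Defensive.
Import Order.TTheory GRing.Theory Num.Theory.
Import numFieldNormedType.Exports.
Local Open Scope classical_set_scope.
Local Open Scope ring_scope.

Section Auction.
Variable R : realType.

(* Points of R^3 (bid vectors), with the product (= Borel) sigma-algebra. *)
Definition R3 := (R * R * R)%type.

Definition mk3 (a b c : R) : R3 := (a, b, c).

(* coordinate j (j = 0,1,2 stand for items 1,2,3) *)
Definition coord (x : R3) (j : 'I_3) : R :=
  match val j with 0%N => x.1.1 | 1%N => x.1.2 | _ => x.2 end.

Definition feasible (B : R) : set R3 :=
  [set x | (forall j, 0 <= coord x j) /\ \sum_(j < 3) coord x j <= B].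

Definition win_prob (Bme Bop vme vop xme xop : R) : R :=
  if xop < xme then 1
  else if xme < xop then 0
  else
    if xme == Num.min (Num.min Bme Bop) (Num.min vme vop) then
      if Num.min Bop vop < Num.min Bme vme then 1
      else if Num.min Bme vme < Num.min Bop vop then 0
      else 2^-1
    else 2^-1.

Definition util (Bme Bop : R) (vme vop : 'I_3 -> R) (xme xop : R3) : R :=
  \sum_(j < 3)
    (win_prob Bme Bop (vme j) (vop j) (coord xme j) (coord xop j) * vme j
     - coord xme j).

Definition u1 (B1 B2 : R) (v1 v2 : 'I_3 -> R) (x1 x2 : R3) : R :=
  util B1 B2 v1 v2 x1 x2.
Definition u2 (B1 B2 : R) (v1 v2 : 'I_3 -> R) (x1 x2 : R3) : R :=
  util B2 B1 v2 v1 x2 x1.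

Definition mixed_strategy (B : R) (P : probability R3 R) : Prop :=
  P (feasible B) = 1%E.

Definition seg (A B : R3) (t : R) : R3 :=
  mk3 (A.1.1 + t * (B.1.1 - A.1.1)) (A.1.2 + t * (B.1.2 - A.1.2))
      (A.2 + t * (B.2 - A.2)).

(* A "segment strategy": a finite list of (mass, (endpoint, endpoint)); it is
   the mixed strategy whose density w.r.t. arc length is mass/|segment| on
   each listed segment, i.e. the mixture of the uniform distributions on the
   segments with the given masses. *)
Definition segE (A B : R3) (g : R3 -> \bar R) : \bar R :=
  (\int[lebesgue_measure]_(t in `[0%R, 1%R]) g (seg A B t))%E.

Definition mixE (s : seq (R * (R3 * R3))) (g : R3 -> \bar R) : \bar R :=
  (\sum_(k <- s) (k.1)%:E * segE k.2.1 k.2.2 g)%E.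

Definition seg_strategy (B : R) (s : seq (R * (R3 * R3))) : Prop :=
  (forall k, k \in s -> 0 <= k.1) /\ \sum_(k <- s) k.1 = 1 /\
  (forall k t, k \in s -> 0 <= t <= 1 -> feasible B (seg k.2.1 k.2.2 t)).

(* Expected utilities are iterated
   integrals of the bounded measurable utilities (= integrals against the
   product measure). *)
Definition nash_seg (B1 B2 : R) (v1 v2 : 'I_3 -> R)
    (f1 f2 : seq (R * (R3 * R3))) : Prop :=
  seg_strategy B1 f1 /\ seg_strategy B2 f2 /\
  (forall P : probability R3 R, mixed_strategy B1 P ->
     (\int[P]_x mixE f2 (fun y => (u1 B1 B2 v1 v2 x y)%:E)
      <= mixE f1 (fun x => mixE f2 (fun y => (u1 B1 B2 v1 v2 x y)%:E)))%E) /\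
  (forall P : probability R3 R, mixed_strategy B2 P ->
     (\int[P]_y mixE f1 (fun x => (u2 B1 B2 v1 v2 x y)%:E)
      <= mixE f2 (fun y => mixE f1 (fun x => (u2 B1 B2 v1 v2 x y)%:E)))%E).

Definition vals (a b c : R) : 'I_3 -> R := fun j => coord (mk3 a b c) j.

End Auction.

(* Main.v *)
Require Import Defs.
From HB Require Import structures.
From mathcomp Require Import all_boot all_order all_algebra.
From mathcomp Require Import all_classical all_reals all_analysis.
From mathcomp Require Import ring lra.
From mathcomp Require Import measurable_realfun.
Import Order.TTheory GRing.Theory Num.Theory.
Import numFieldNormedType.Exports.
Local Open Scope classical_set_scope.
Local Open Scope ring_scope.

Local Notation coord := Defs.coord.
Section S.
Variable R : realType.
Local Notation mu := (@lebesgue_measure R).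

Lemma bnd_helper (T : Type) (A : set T) (f : T -> R) (M0 : R) :
  (forall x, A x -> `|f x| <= M0) -> [bounded f x | x in A].
Proof.
move=> H; exists M0; split; first exact: num_real.
move=> M hM x Ax; exact: le_trans (H x Ax) (ltW hM).
Qed.

Lemma int01 (f : R -> R) (M0 : R) : measurable_fun (`[0%R, 1%R] : set R) f ->
  (forall t, `|f t| <= M0) -> mu.-integrable (`[0%R, 1%R] : set R) (EFin \o f).
Proof.
move=> mf H; apply: measurable_bounded_integrable => //.
  have := @lebesgue_measure_itv R `[0%R, 1%R]; rewrite /= lte01 oppr0 adde0 => ->.
  exact: (@ltry R 1).
apply: (@bnd_helper _ _ _ M0) => t _; exact: H.
Qed.

Definition clamp01 (c : R) := Num.min (Num.max c 0) 1.

Lemma clamp01_le0 c : c <= 0 -> clamp01 c = 0.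
Proof. by move=> h; rewrite /clamp01 (max_r h) (min_l ler01). Qed.
Lemma clamp01_mid c : 0 <= c -> c <= 1 -> clamp01 c = c.
Proof. by move=> h1 h2; rewrite /clamp01 (max_l h1) (min_l h2). Qed.
Lemma clamp01_ge1 c : 1 <= c -> clamp01 c = 1.
Proof. by move=> h; rewrite /clamp01 (max_l (le_trans ler01 h)) (min_r h). Qed.

Lemma meas_lt (c : R) :
  mu ([set t | t < c] `&` (`[0%R, 1%R] : set R)) = (clamp01 c)%:E.
Proof.
have [c0|c0] := lerP c 0.
  rewrite (_ : _ `&` _ = set0) ?measure0; last first.
    apply/seteqP; split => t //= [h1]; rewrite in_itv /= => /andP[h2 h3]; lra.
  by rewrite clamp01_le0.
have [c1|c1] := lerP c 1.
  rewrite (_ : _ `&` _ = `[0%R, c[%classic); last first.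
    apply/seteqP; split => t /=.
      by move=> [h1]; rewrite !in_itv /= => /andP[h2 h3]; rewrite h2 h1.
    rewrite !in_itv /= => /andP[h2 h3]; split => //; rewrite h2 /=; lra.
  have := @lebesgue_measure_itv R `[0%R, c[; rewrite /= => ->.
  by rewrite lte_fin c0 clamp01_mid ?oppr0 ?adde0 // ltW.
rewrite (_ : _ `&` _ = `[0%R, 1%R]%classic); last first.
  apply/seteqP; split => t /=; first by case.
  rewrite !in_itv /= => /andP[h2 h3]; split; first lra.
  by rewrite h2 h3.
have := @lebesgue_measure_itv R `[0%R, 1%R]; rewrite /= => ->.
by rewrite lte_fin ltr01 oppr0 adde0 clamp01_ge1 // ltW.
Qed.

Lemma meas_gt (c : R) :
  mu ([set t | c < t] `&` (`[0%R, 1%R] : set R)) = (1 - clamp01 c)%:E.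
Proof.
have [c0|c0] := ltrP c 0.
  rewrite (_ : _ `&` _ = `[0%R, 1%R]%classic); last first.
    apply/seteqP; split => t /=; first by case.
    rewrite !in_itv /= => /andP[h2 h3]; split; first lra.
    by rewrite h2 h3.
  have := @lebesgue_measure_itv R `[0%R, 1%R]; rewrite /= => ->.
  by rewrite lte_fin ltr01 oppr0 adde0 clamp01_le0 ?subr0 // ltW.
have [c1|c1] := ltrP c 1.
  rewrite (_ : _ `&` _ = `]c, 1%R]%classic); last first.
    apply/seteqP; split => t /=.
      by move=> [h1]; rewrite !in_itv /= => /andP[h2 h3]; rewrite h3 h1.
    rewrite !in_itv /= => /andP[h2 h3]; split => //; rewrite h3 andbT; lra.
  have := @lebesgue_measure_itv R `]c, 1%R]; rewrite /= => ->.
  by rewrite lte_fin c1 clamp01_mid ?EFinB // ltW.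
rewrite (_ : _ `&` _ = set0) ?measure0; last first.
  apply/seteqP; split => t //= [h1]; rewrite in_itv /= => /andP[h2 h3]; lra.
by rewrite clamp01_ge1 // subrr.
Qed.

Lemma indicP' (P : R -> bool) t : \1_[set x | P x] t = (P t)%:R :> R.
Proof.
rewrite indicE; case: (boolP (P t)) => h; first by rewrite mem_set.
by rewrite memNset //; apply/negP.
Qed.

Lemma int_indic (L : set R) (k : R) : measurable L ->
  mu.-integrable (`[0%R, 1%R] : set R) (EFin \o (fun t => k * \1_L t)) /\
  (\int[mu]_(t in (`[0%R, 1%R] : set R)) (k * \1_L t)%:E =
     k%:E * mu (L `&` `[0%R, 1%R]))%E.
Proof.
move=> mL.
have bnd t : `|\1_L t| <= 1 :> R by rewrite indicE; case: (_ \in _); rewrite ?normr0 ?normr1.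
have i1 : mu.-integrable (`[0%R, 1%R] : set R) (EFin \o (fun t => \1_L t)).
  apply: (@int01 _ 1) => //; exact: measurable_indic.
split.
  apply: (@int01 _ `|k|).
    by apply: measurable_funM => //; exact: measurable_indic.
  by move=> t; rewrite normrM ler_piMr.
under eq_integral => t _ do rewrite EFinM.
by rewrite integralZl //= integral_indic.
Qed.

Lemma wp_eq (Bme Bop v s y : R) : v <= Bme -> v <= Bop ->
  win_prob Bme Bop v v s y = (y < s)%R%:R + 2^-1 * (y == s)%:R.
Proof.
move=> h1 h2; rewrite /win_prob (min_r h1) (min_r h2) ltxx.
case: ltrgtP => h; rewrite ?mulr0 ?addr0 ?add0r //.
by rewrite mulr1; case: ifP.
Qed.

Definition Mf (a b s : R) :=
  if a < b then clamp01 ((s - a) / (b - a)) else 1 - clamp01 ((s - a) / (b - a)).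

Lemma piece (Bme Bop a b s v : R) : a != b -> v <= Bme -> v <= Bop ->
  mu.-integrable (`[0%R, 1%R] : set R)
     (EFin \o (fun t => win_prob Bme Bop v v s (a + t * (b - a)) * v - s)) /\
  (\int[mu]_(t in (`[0%R, 1%R] : set R))
     (win_prob Bme Bop v v s (a + t * (b - a)) * v - s)%:E =
   (Mf a b s * v - s)%:E)%E.
Proof.
move=> ab h1 h2.
set c := (s - a) / (b - a).
have ba0 : b - a != 0 by rewrite subr_eq0 eq_sym.
have hc : c * (b - a) = s - a by rewrite /c divfK.
set L := if a < b then [set t : R | t < c] else [set t : R | c < t].
have mL : measurable L.
  rewrite /L; case: ifP => _.
    rewrite (_ : [set t | t < c] = `]-oo, c[%classic); first exact: measurable_itv.
    by apply/seteqP; split => t /=; rewrite in_itv.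
  rewrite (_ : [set t | c < t] = `]c, +oo[%classic); first exact: measurable_itv.
  by apply/seteqP; split => t /=; rewrite in_itv /= andbT.
have mT : measurable [set t : R | t == c].
  rewrite (_ : [set t : R | t == c] = [set c]); first exact: measurable_set1.
  by apply/seteqP; split => t /= /eqP.
have mS : measurable [set t : R | true].
  by rewrite (_ : [set _ | true] = setT) //; apply/seteqP; split.
have eqb t : (a + t * (b - a) == s) = (t == c).
  apply/eqP/eqP => h.
    apply: (mulIf ba0); rewrite hc; lra.
  rewrite h hc; lra.
have ltb t : ((a + t * (b - a) < s)%R%:R : R) = \1_L t.
  rewrite /L; case: ifP => hab.
    rewrite (indicP' (fun t => t < c)); congr (_%:R).
    rewrite /c ltr_pdivlMr ?subr_gt0 //.
    by congr nat_of_bool; apply/idP/idP => h; lra.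
  have hba : b < a by rewrite lt_neqAle eq_sym ab /= leNgt hab.
  have -> : c = (a - s) / (a - b).
    by rewrite /c -opprB -[b - a]opprB invrN mulrNN.
  rewrite (indicP' (fun t => (a - s) / (a - b) < t)); congr (_%:R).
  rewrite ltr_pdivrMr ?subr_gt0 //.
  by congr nat_of_bool; apply/idP/idP => h; lra.
set T := [set t : R | t == c]; set S := [set t : R | true].
have pw t : win_prob Bme Bop v v s (a + t * (b - a)) * v - s =
    v * \1_L t + ((v / 2) * \1_T t + (- s) * \1_S t).
  rewrite wp_eq // ltb eqb /T /S (indicP' (fun t => t == c)) (indicP' (fun=> true)) /=.
  ring.
have [iL IL] := @int_indic L v mL.
have [iT IT] := @int_indic T (v / 2) mT.
have [iS IS] := @int_indic S (- s) mS.
have m01 : measurable (`[0%R, 1%R] : set R) by exact: measurable_itv.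
have iTS : mu.-integrable (`[0%R, 1%R] : set R)
    (fun t => (v / 2 * \1_T t)%:E + (- s * \1_S t)%:E)%E.
  by apply: integrableD => //; exact: measurable_itv.
split.
  have -> : (EFin \o (fun t => win_prob Bme Bop v v s (a + t * (b - a)) * v - s)) =
    (fun t => (v * \1_L t)%:E + ((v / 2 * \1_T t)%:E + (- s * \1_S t)%:E))%E.
    by apply/funext => t /=; rewrite pw !EFinD.
  by apply: integrableD => //; exact: measurable_itv.
under eq_integral => t _ do rewrite pw !EFinD.
rewrite integralD; [|exact: measurable_itv|exact: iL|exact: iTS].
rewrite integralD; [|exact: measurable_itv|exact: iT|exact: iS].
rewrite IL IT IS.
have -> : mu (T `&` `[0%R, 1%R]) = 0%E.
  apply: (@subset_measure0 _ _ _ mu _ [set c]) => //.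
  - by apply: measurableI => //; exact: measurable_itv.
  - by move=> t [/eqP ->].
  - exact: lebesgue_measure_set1.
have -> : mu (S `&` `[0%R, 1%R]) = 1%E.
  rewrite (_ : S `&` _ = `[0%R, 1%R]%classic); last by apply/seteqP; split => t //= [].
  have := @lebesgue_measure_itv R `[0%R, 1%R]; rewrite /= => ->.
  by rewrite lte_fin ltr01 oppr0 adde0.
rewrite mule0 add0e mule1 /Mf /L; case: ifP => _; rewrite ?meas_lt ?meas_gt -EFinM -EFinD; congr EFin; ring.
Qed.

Lemma coord_seg (A B : R3 R) t j :
  coord (seg A B t) j = coord A j + t * (coord B j - coord A j).
Proof. by case: j => [[|[|k]] ?]. Qed.

Lemma segE_util (Bme Bop : R) (v : 'I_3 -> R) (x A B : R3 R) :
  (forall j, coord A j != coord B j) -> (forall j, v j <= Bme) ->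
  (forall j, v j <= Bop) ->
  segE A B (fun y => (util Bme Bop v v x y)%:E) =
  (\sum_(j < 3) (Mf (coord A j) (coord B j) (coord x j) * v j - coord x j))%:E.
Proof.
move=> hAB h1 h2; rewrite /segE /util.
under eq_integral => t _ do rewrite -sumEFin.
rewrite integral_sum; last 2 first.
- exact: measurable_itv.
- move=> j; rewrite /=.
  have H := (@piece Bme Bop _ _ (coord x j) _ (hAB j) (h1 j) (h2 j)).1.
  apply: (eq_integrable _ _ _ _ H); first exact: measurable_itv.
  by move=> t _ /=; rewrite coord_seg.
rewrite -sumEFin; apply: eq_bigr => j _.
under eq_integral => t _ do rewrite coord_seg.
exact: (@piece Bme Bop _ _ (coord x j) _ (hAB j) (h1 j) (h2 j)).2.
Qed.

Definition cl (s lo hi : R) := Num.min (Num.max s lo) hi.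

Lemma cl_lo s lo hi : lo <= hi -> s <= lo -> cl s lo hi = lo.
Proof. by move=> h1 h2; rewrite /cl (max_r h2) (min_l h1). Qed.
Lemma cl_mid s lo hi : lo <= s -> s <= hi -> cl s lo hi = s.
Proof. by move=> h1 h2; rewrite /cl (max_l h1) (min_l h2). Qed.
Lemma cl_hi s lo hi : lo <= hi -> hi <= s -> cl s lo hi = hi.
Proof. by move=> h1 h2; rewrite /cl (max_l (le_trans h1 h2)) (min_r h2). Qed.

Lemma Mf_lt a b s : a < b -> Mf a b s = (cl s a b - a) / (b - a).
Proof.
move=> hab; rewrite /Mf hab.
have d0 : 0 < b - a by rewrite subr_gt0.
have hab' := ltW hab.
have [sa|sa] := lerP s a.
  rewrite cl_lo // subrr mul0r clamp01_le0 //.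
  by rewrite ler_pdivrMr // mul0r; lra.
have [sb|sb] := lerP s b.
  rewrite cl_mid ?(ltW sa) // clamp01_mid //.
    by rewrite divr_ge0 //; lra.
  by rewrite ler_pdivrMr // mul1r; lra.
rewrite cl_hi ?(ltW sb) // divff ?lt0r_neq0 // clamp01_ge1 //.
by rewrite ler_pdivlMr // mul1r; lra.
Qed.

Lemma Mf_gt a b s : b < a -> Mf a b s = (cl s b a - b) / (a - b).
Proof.
move=> hab; rewrite /Mf ltNge (ltW hab) /=.
have d0 : 0 < a - b by rewrite subr_gt0.
have hab' := ltW hab.
have E : (s - a) / (b - a) = (a - s) / (a - b).
  by rewrite -opprB -[b - a]opprB invrN mulrNN.
rewrite E.
have [sa|sa] := lerP s b.
  rewrite cl_lo // subrr mul0r clamp01_ge1 ?subrr //.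
  by rewrite ler_pdivlMr // mul1r; lra.
have [sb|sb] := lerP s a.
  rewrite cl_mid ?(ltW sa) // clamp01_mid //.
  - by rewrite -[1](divff (lt0r_neq0 d0)) -mulrBl; congr (_ * _); lra.
  - by rewrite divr_ge0 //; lra.
  - by rewrite ler_pdivrMr // mul1r; lra.
rewrite cl_hi ?(ltW sb) // divff ?lt0r_neq0 // clamp01_le0 ?subr0 //.
by rewrite ler_pdivrMr // mul0r; lra.
Qed.

Lemma cl_split s c e : 0 <= c -> c <= e -> cl s c e = cl s 0 e - cl s 0 c + c.
Proof.
move=> h1 h2; have h0 := le_trans h1 h2.
have [s0|s0] := lerP s 0.
  rewrite (@cl_lo s c e) ?(@cl_lo s 0 e) ?(@cl_lo s 0 c) //; try lra.
have [sc|sc] := lerP s c.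
  rewrite (@cl_lo s c e) ?(@cl_mid s 0 e) ?(@cl_mid s 0 c) //; try lra.
have [se|se] := lerP s e.
  rewrite (@cl_mid s c e) ?(@cl_mid s 0 e) ?(@cl_hi s 0 c) //; try lra.
rewrite (@cl_hi s c e) ?(@cl_hi s 0 e) ?(@cl_hi s 0 c) //; try lra.
Qed.

Definition Psi (v : 'I_3 -> R) (x : R3 R) :=
  \sum_(j < 3) (cl (coord x j) 0 (v j) - coord x j).

Lemma mixE_util (Bme Bop : R) (v : 'I_3 -> R) (x : R3 R)
    (f : seq (R * (R3 R * R3 R))) :
  (forall k, k \in f -> forall j, coord k.2.1 j != coord k.2.2 j) ->
  (forall j, v j <= Bme) -> (forall j, v j <= Bop) ->
  \sum_(k <- f) k.1 = 1 ->
  (forall j s, \sum_(k <- f) k.1 * Mf (coord k.2.1 j) (coord k.2.2 j) s * v j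
      = cl s 0 (v j)) ->
  mixE f (fun y => (util Bme Bop v v x y)%:E) = (Psi v x)%:E.
Proof.
move=> hf h1 h2 hs hm; rewrite /mixE.
rewrite (eq_big_seq (fun k => (k.1 * \sum_(j < 3)
   (Mf (coord k.2.1 j) (coord k.2.2 j) (coord x j) * v j - coord x j))%:E)); last first.
  by move=> k kf; rewrite segE_util // ?EFinM //; exact: hf.
rewrite sumEFin; congr EFin.
under eq_bigr do rewrite mulr_sumr.
rewrite exchange_big /Psi; apply: eq_bigr => j _.
under eq_bigr do rewrite mulrBr mulrA.
by rewrite sumrB hm -mulr_suml hs mul1r.
Qed.

Lemma mcoord j : measurable_fun setT (fun x : R3 R => coord x j).
Proof.
case: j => [[|[|k]] ?] /=.
- exact: (measurableT_comp measurable_fst measurable_fst).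
- exact: (measurableT_comp measurable_snd measurable_fst).
- exact: measurable_snd.
Qed.

Lemma mPsi v : measurable_fun setT (Psi v).
Proof.
apply: measurable_sum => j.
apply: measurable_funB; last exact: mcoord.
apply: measurable_minr => //; apply: measurable_maxr => //; exact: mcoord.
Qed.

Lemma mfeas (B : R) : measurable (feasible B).
Proof.
have -> : feasible B = (fun x : R3 R => [&& 0 <= coord x ord0, 0 <= coord x (lift ord0 ord0),
     0 <= coord x ord_max & \sum_(j < 3) coord x j <= B]) @^-1` [set true].
  apply/seteqP; split => x /=.
    move=> [h1 h2]; by rewrite !h1 h2.
  move=> /and4P[h0 h1 h2 h3]; split => // -[[|[|[|k]]] ?] //.
have mle (g : R3 R -> R) c : measurable_fun setT g -> measurable_fun setT (fun x => c <= g x).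
  by move=> mg; apply: measurable_fun_ler.
have mge (g : R3 R -> R) c : measurable_fun setT g -> measurable_fun setT (fun x => g x <= c).
  by move=> mg; apply: measurable_fun_ler.
have mb : measurable_fun setT (fun x : R3 R => [&& 0 <= coord x ord0, 0 <= coord x (lift ord0 ord0),
     0 <= coord x ord_max & \sum_(j < 3) coord x j <= B]).
  apply: measurable_and; first by apply: mle; exact: mcoord.
  apply: measurable_and; first by apply: mle; exact: mcoord.
  apply: measurable_and; first by apply: mle; exact: mcoord.
  by apply: mge; apply: measurable_sum => j; exact: mcoord.
rewrite -[X in measurable X]setTI; exact: mb.
Qed.

Lemma Psi_le0 (v : 'I_3 -> R) x : (forall j, 0 <= coord x j) -> Psi v x <= 0.
Proof.
move=> h; rewrite /Psi; apply: sumr_le0 => j _.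
rewrite subr_le0 /cl (max_l (h j)); by rewrite ge_min lexx.
Qed.

Lemma Psi0 (v : 'I_3 -> R) x : (forall j, 0 <= coord x j <= v j) -> Psi v x = 0.
Proof.
move=> h; rewrite /Psi big1 // => j _.
by have /andP[h1 h2] := h j; rewrite cl_mid // subrr.
Qed.

Lemma int_Psi (P : probability (R3 R) R) (B : R) (v : 'I_3 -> R) :
  P (feasible B) = 1%E -> (\int[P]_x (Psi v x)%:E <= 0)%E.
Proof.
move=> PF.
have mg : measurable_fun setT (fun x => (Psi v x)%:E).
  by apply/measurable_EFinP; exact: mPsi.
have mF := mfeas B.
have PC : P (~` feasible B) = 0%E by rewrite probability_setC // PF subee.
rewrite integralE.
rewrite (@ge0_negligible_integral _ _ _ P setT (~` feasible B)) //; last first.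
all: try (by move=> x _; exact: funepos_ge0).
all: try (by apply: measurable_funepos).
all: try (by apply: measurableC).
rewrite integral0_eq; last first.
  move=> x [_ /= /contrapT [h1 _]].
  by rewrite funeposE max_r // lee_fin; apply: Psi_le0.
by rewrite sub0e oppe_le0; apply: integral_ge0 => x _; exact: funeneg_ge0.
Qed.

Lemma seg_box (A B : R3 R) t j lo hi : 0 <= t <= 1 ->
  lo <= coord A j <= hi -> lo <= coord B j <= hi ->
  lo <= coord (seg A B t) j <= hi.
Proof.
move=> /andP[t0 t1] /andP[a1 a2] /andP[b1 b2]; rewrite coord_seg.
apply/andP; split; nra.
Qed.

Lemma seg_sum (A B : R3 R) t :
  \sum_(j < 3) coord (seg A B t) j =
  (1 - t) * \sum_(j < 3) coord A j + t * \sum_(j < 3) coord B j.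
Proof. under eq_bigr do rewrite coord_seg. rewrite big_split /= -mulr_sumr sumrB; ring. Qed.

Lemma mixE_Psi0 (v : 'I_3 -> R) (f : seq (R * (R3 R * R3 R))) :
  (forall k t j, k \in f -> 0 <= t <= 1 -> 0 <= coord (seg k.2.1 k.2.2 t) j <= v j) ->
  mixE f (fun x => (Psi v x)%:E) = 0%E.
Proof.
move=> h; rewrite /mixE big_seq big1 // => k kf.
rewrite /segE integral0_eq ?mule0 // => t t01.
rewrite Psi0 // => j; apply: h => //.
Qed.

Lemma nash_gen (B1 B2 : R) (v : 'I_3 -> R) (f : seq (R * (R3 R * R3 R))) :
  seg_strategy B1 f -> seg_strategy B2 f ->
  (forall k, k \in f -> forall j, coord k.2.1 j != coord k.2.2 j) ->
  (forall j, v j <= B1) -> (forall j, v j <= B2) ->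
  (forall j s, \sum_(k <- f) k.1 * Mf (coord k.2.1 j) (coord k.2.2 j) s * v j
      = cl s 0 (v j)) ->
  (forall k t j, k \in f -> 0 <= t <= 1 -> 0 <= coord (seg k.2.1 k.2.2 t) j <= v j) ->
  nash_seg B1 B2 v v f f.
Proof.
move=> s1 s2 hne h1 h2 hm hsup.
have hs : \sum_(k <- f) k.1 = 1 by case: s1 => _ [].
split => //; split => //; split.
- move=> P PF.
  have E1 : (fun x => mixE f (fun y => (u1 B1 B2 v v x y)%:E)) = (fun x => (Psi v x)%:E).
    by apply/funext => x; exact: (@mixE_util _ _ _ x _ hne h1 h2 hs hm).
  rewrite E1 mixE_Psi0 //; exact: int_Psi PF.
- move=> P PF.
  have E1 : (fun y => mixE f (fun x => (u2 B1 B2 v v x y)%:E)) = (fun y => (Psi v y)%:E).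
    by apply/funext => y; exact: (@mixE_util _ _ _ y _ hne h2 h1 hs hm).
  rewrite E1 mixE_Psi0 //; exact: int_Psi PF.
Qed.

Lemma seg_strat_gen (B : R) (f : seq (R * (R3 R * R3 R))) :
  (forall k, k \in f -> 0 <= k.1) -> \sum_(k <- f) k.1 = 1 ->
  (forall k j, k \in f -> 0 <= coord k.2.1 j /\ 0 <= coord k.2.2 j) ->
  (forall k, k \in f -> \sum_(j < 3) coord k.2.1 j <= B /\ \sum_(j < 3) coord k.2.2 j <= B) ->
  seg_strategy B f.
Proof.
move=> h0 h1 h2 h3; split => //; split => // k t kf /andP[t0 t1]; split.
  move=> j; have [a0 b0] := h2 k j kf; rewrite coord_seg; nra.
have [a0 b0] := h3 k kf; rewrite seg_sum; nra.
Qed.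

Lemma sup_gen (v : 'I_3 -> R) (f : seq (R * (R3 R * R3 R))) :
  (forall k j, k \in f -> 0 <= coord k.2.1 j <= v j /\ 0 <= coord k.2.2 j <= v j) ->
  (forall k t j, k \in f -> 0 <= t <= 1 -> 0 <= coord (seg k.2.1 k.2.2 t) j <= v j).
Proof.
move=> h k t j kf t01; have [a b] := h k j kf; exact: seg_box.
Qed.

Lemma case1 (w1 w2 w3 a b c B1 B2 : R) : 0 < a -> 0 < b -> 0 < c ->
  w1 = b + c -> w2 = a + c -> w3 = a + b ->
  a + b + c <= B1 -> a + b + c <= B2 ->
  (forall j, vals w1 w2 w3 j <= B1) -> (forall j, vals w1 w2 w3 j <= B2) ->
  let K := c / b + 1 + c / a in
  nash_seg B1 B2 (vals w1 w2 w3) (vals w1 w2 w3)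
    [:: (K^-1 * (c / b), (mk3 w1 0 a, mk3 b w2 0));
        (K^-1, (mk3 b w2 0, mk3 0 c w3));
        (K^-1 * (c / a), (mk3 0 c w3, mk3 w1 0 a))]
    [:: (K^-1 * (c / b), (mk3 w1 0 a, mk3 b w2 0));
        (K^-1, (mk3 b w2 0, mk3 0 c w3));
        (K^-1 * (c / a), (mk3 0 c w3, mk3 w1 0 a))].
Proof.
move=> ha hb hc e1 e2 e3 hB1 hB2 vB1 vB2 K.
set f1 := [:: _; _; _].
have K0 : 0 < K by rewrite /K !addr_gt0 ?divr_gt0.
have Kn : K != 0 by exact: lt0r_neq0.
have an : a != 0 by exact: lt0r_neq0.
have bn : b != 0 by exact: lt0r_neq0.
have cn : c != 0 by exact: lt0r_neq0.
have hs : \sum_(k <- f1) k.1 = 1.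
  rewrite !big_cons big_nil /= addr0.
  apply: (mulfI Kn); rewrite mulr1 !mulrDr !mulrA !mulfV // !mul1r /K; ring.
have hnn : forall k, k \in f1 -> 0 <= k.1.
  move=> k; rewrite !inE => /or3P[]/eqP -> /=; apply: ltW;
   rewrite ?mulr_gt0 ?invr_gt0 ?divr_gt0 //.
have hcc : forall k j, k \in f1 ->
    0 <= coord k.2.1 j <= vals w1 w2 w3 j /\ 0 <= coord k.2.2 j <= vals w1 w2 w3 j.
  move=> k j; rewrite !inE => /or3P[]/eqP -> /=; rewrite /vals /Defs.coord /mk3;
  by case: j => [[|[|[|?]]] ?] /=; split; apply/andP; split; lra.
have hsum : forall B, (a + b + c <= B) -> forall k, k \in f1 ->
    \sum_(j < 3) coord k.2.1 j <= B /\ \sum_(j < 3) coord k.2.2 j <= B.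
  move=> B hB k; rewrite !inE => /or3P[]/eqP -> /=;
  by rewrite !big_ord_recr !big_ord0 /Defs.coord /mk3 /=; split; lra.
have hn : forall k j, k \in f1 -> 0 <= coord k.2.1 j /\ 0 <= coord k.2.2 j.
  by move=> k j kf; have [/andP[? _] /andP[? _]] := hcc k j kf.
apply: nash_gen => //.
- by apply: seg_strat_gen => //; exact: hsum.
- by apply: seg_strat_gen => //; exact: hsum.
- move=> k; rewrite !inE => /or3P[]/eqP -> j /=; rewrite /Defs.coord /mk3;
  by case: j => [[|[|[|?]]] ?] /=; apply/eqP; lra.
- move=> j s; rewrite !big_cons big_nil addr0 /= /vals /Defs.coord /mk3.
  subst w1 w2 w3.
  case: j => [[|[|[|?]]] ?] /=.
  + rewrite (@Mf_gt (b + c) b s) ?(@Mf_gt b 0 s) ?(@Mf_lt 0 (b + c) s); try lra.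
    rewrite (@cl_split s b (b + c)); try lra.
    rewrite /K; field.
    by repeat (apply/andP; split); apply: lt0r_neq0; nra.
  + rewrite (@Mf_lt 0 (a + c) s) ?(@Mf_gt (a + c) c s) ?(@Mf_gt c 0 s); try lra.
    rewrite (@cl_split s c (a + c)); try lra.
    rewrite /K; field.
    by repeat (apply/andP; split); apply: lt0r_neq0; nra.
  + rewrite (@Mf_gt a 0 s) ?(@Mf_lt 0 (a + b) s) ?(@Mf_gt (a + b) a s); try lra.
    rewrite (@cl_split s a (a + b)); try lra.
    rewrite /K; field.
    by repeat (apply/andP; split); apply: lt0r_neq0; nra.
  + rewrite (@Mf_gt a 0 s) ?(@Mf_lt 0 (a + b) s) ?(@Mf_gt (a + b) a s); try lra.
    rewrite (@cl_split s a (a + b)); try lra.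
    rewrite /K; field.
    by repeat (apply/andP; split); apply: lt0r_neq0; nra.
- move=> k t j kf t01; by have := @sup_gen _ f1 hcc k t j kf t01.
Qed.

End S.

Theorem theorem6 (R : realType) (w1 w2 w3 B1 B2 : R) :
  0 < w3 -> w3 <= w2 -> w2 <= w1 ->
  let z := (w1 + w2 + w3) / 2 in
  Num.max z w1 <= B1 -> Num.max z w1 <= B2 ->
  (w1 < z ->
     let A := mk3 w1 0 (z - w1) in
     let B := mk3 (z - w2) w2 0 in
     let C := mk3 0 (z - w3) w3 in
     let K := (z - w3) / (z - w2) + 1 + (z - w3) / (z - w1) in
     let PAB := K^-1 * ((z - w3) / (z - w2)) in
     let PBC := K^-1 in
     let PCA := K^-1 * ((z - w3) / (z - w1)) in
     let f := [:: (PAB, (A, B)); (PBC, (B, C)); (PCA, (C, A))] in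
     nash_seg B1 B2 (vals w1 w2 w3) (vals w1 w2 w3) f f) /\
  (z <= w1 ->
     let A := mk3 w1 0 0 in
     let B := mk3 0 w2 w3 in
     let f := [:: (1, (A, B))] in
     nash_seg B1 B2 (vals w1 w2 w3) (vals w1 w2 w3) f f).
Proof.
move=> h3 h32 h21 z hB1 hB2.
have := hB1; rewrite ge_max => /andP[zB1 wB1].
have := hB2; rewrite ge_max => /andP[zB2 wB2].
rewrite {}/z in hB1 hB2 zB1 zB2 *.
have vB1 : forall j, vals w1 w2 w3 j <= B1.
  rewrite /vals /Defs.coord /mk3; case=> [[|[|[|?]]] ?] /=; lra.
have vB2 : forall j, vals w1 w2 w3 j <= B2.
  rewrite /vals /Defs.coord /mk3; case=> [[|[|[|?]]] ?] /=; lra.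
split; last first.
  move=> hz; cbv zeta.
  pose f1 : seq (R * (R3 R * R3 R)) := [:: (1, (mk3 w1 0 0, mk3 0 w2 w3))].
  change (nash_seg B1 B2 (vals w1 w2 w3) (vals w1 w2 w3) f1 f1).
  have hs : \sum_(k <- f1) k.1 = 1 by rewrite big_cons big_nil addr0.
  have hnn : forall k, k \in f1 -> 0 <= k.1.
    by move=> k; rewrite mem_seq1 => /eqP -> /=.
  have hc : forall k j, k \in f1 ->
      0 <= coord k.2.1 j <= vals w1 w2 w3 j /\ 0 <= coord k.2.2 j <= vals w1 w2 w3 j.
    move=> k j; rewrite mem_seq1 => /eqP -> /=; rewrite /vals /Defs.coord /mk3.
    by case: j => [[|[|[|?]]] ?] /=; split; apply/andP; split; lra.
  have hsum : forall B, (w1 <= B) -> forall k, k \in f1 ->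
      \sum_(j < 3) coord k.2.1 j <= B /\ \sum_(j < 3) coord k.2.2 j <= B.
    move=> B hB k; rewrite mem_seq1 => /eqP -> /=.
    by rewrite !big_ord_recr !big_ord0 /Defs.coord /mk3 /=; split; lra.
  have hn : forall k j, k \in f1 -> 0 <= coord k.2.1 j /\ 0 <= coord k.2.2 j.
    by move=> k j kf; have [/andP[? _] /andP[? _]] := hc k j kf.
  apply: nash_gen => //.
  - by apply: seg_strat_gen => //; exact: hsum.
  - by apply: seg_strat_gen => //; exact: hsum.
  - move=> k; rewrite mem_seq1 => /eqP -> j /=; rewrite /Defs.coord /mk3.
    by case: j => [[|[|[|?]]] ?] /=; apply/eqP; lra.
  - move=> j s; rewrite big_cons big_nil addr0 /= mul1r /vals /Defs.coord /mk3.
    case: j => [[|[|[|?]]] ?] /=.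
    + by rewrite Mf_gt // ?subr0 ?divfK ?lt0r_neq0 //; lra.
    + by rewrite Mf_lt // ?subr0 ?divfK ?lt0r_neq0 //; lra.
    + by rewrite Mf_lt // ?subr0 ?divfK ?lt0r_neq0 //; lra.
    + by rewrite Mf_lt // ?subr0 ?divfK ?lt0r_neq0 //; lra.
  - exact: sup_gen.
move=> hz; cbv zeta.
apply: (@case1 R w1 w2 w3 ((w1 + w2 + w3) / 2 - w1) ((w1 + w2 + w3) / 2 - w2)
  ((w1 + w2 + w3) / 2 - w3) B1 B2) => //; lra.
Qed.
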